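(* Let $G$ be a trivalent graph embedded in the $2$-sphere with a perfect matching $M$ such that $G(V,E\setminus M)$ is a single cycle $C$. For a face $F$ of the embedding, let $m(F)$ be the number of edges of $M$ on the boundary of $F$ and $\ell(F)$ the number of vertices on the boundary of $F$ whose matching edge does not lie on the boundary of $F$. Then $G$ has a face $F$ with $$(m(F),\ell(F))\in\{(1,0),(1,1),(1,2),(2,0),(2,1),(3,0)\}.$$ Explicitly, $G$ contains one of the following local configurations: a digon bounded by one matching edge and one non-matching edge; a triangle bounded by one matching edge and two non-matching edges; a quadrilateral bounded by one matching edge and a path of three non-matching edges; a quadrilateral bounded alternately by two matching and two non-matching edges; a pentagon bounded by two non-adjacent matching edges and three non-matching edges; or a hexagon bounded alternately by three matching and three non-matching edges.
   Context: Graphs are finite and may have multiple edges; trivalent means every vertex has degree $3$. $G(V,E\setminus M)$ denotes the graph with all vertices of $G$ and all edges of $G$ not in $M$. *)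

(* Defs.v *)
(* Sphere-embedded graphs are encoded as combinatorial maps
   (rotation systems) on a finite type of darts (half-edges). *)
From mathcomp Require Import all_boot.
Set Implicit Arguments. Unset Strict Implicit. Unset Printing Implicit Defensive.

Section CombMap.
Variables (D : finType) (alpha sigma : D -> D).

(* alpha : fixed-point-free involution (the two darts of an edge);
   sigma : rotation around vertices (a permutation); vertices = sigma-orbits. *)
Definition is_comb_map : Prop :=
  [/\ forall x, alpha (alpha x) = x, forall x, alpha x != x & injective sigma].

Definition phi (x : D) : D := sigma (alpha x).

Definition map_connected : Prop :=
  forall x y, connect [rel u v | (v == alpha u) || (v == sigma u)] x y.

(* Euler's formula V - E + F = 2: together with connectedness, this says
   the rotation system is a cellular embedding in the 2-sphere *)
Definition genus0 : Prop :=
  (fcard sigma D + fcard phi D = fcard alpha D + 2)%N.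

Definition trivalent : Prop := forall x, order sigma x = 3.

Definition vtx (x : D) : {set D} := [set z | fconnect sigma x z].
Definition edg (x : D) : {set D} := [set x; alpha x].

Variable M : pred D. (* darts belonging to matching edges *)

Definition perfect_matching : Prop :=
  (forall x, M (alpha x) = M x) /\
  (forall x, #|[pred z | fconnect sigma x z & M z]| = 1).

(* G(V, E \ M) is a single cycle: it is 2-regular (automatic from
   trivalence and perfect_matching) and connected. *)
Definition complement_single_cycle : Prop :=
  forall x y,
    connect [rel u v | (v == sigma u) || (~~ M u && (v == alpha u))] x y.

Definition face (x : D) : {set D} := [set y | fconnect phi x y].

Definition face_medges (x : D) : {set {set D}} :=
  [set edg y | y in face x & M y].
Definition face_edges (x : D) : {set {set D}} :=
  [set edg y | y in face x].

Definition mF (x : D) : nat := #|face_medges x|.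

Definition lF (x : D) : nat :=
  #|[set vtx y | y in face x &
       [forall z, (fconnect sigma y z && M z) ==> (edg z \notin face_edges x)]]|.

End CombMap.

(* Main.v *)
Require Import Defs.
From mathcomp Require Import all_boot.
From mathcomp Require Import zify.
Set Implicit Arguments. Unset Strict Implicit. Unset Printing Implicit Defensive.

Lemma sum_bool_card (T : finType) (P b : pred T) :
  \sum_(x | P x) (b x : nat) = #|[pred x | P x & b x]|.
Proof.
rewrite -sum1_card [RHS](eq_bigl (fun x => P x && b x)) // big_mkcondr /=.
by apply: eq_bigr => x _; case: (b x).
Qed.

Lemma sum_by_orbits (T : finType) (f : T -> T) (h : T -> nat) : injective f ->
  \sum_(x : T) h x = \sum_(r | froot f r == r) \sum_(x | fconnect f r x) h x.
Proof.
move=> inj.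
rewrite (partition_big (froot f) (fun r => froot f r == r)) => [|x _]; last first.
  exact: (roots_root (fconnect_sym inj)).
apply: eq_bigr => r /eqP rr; apply: eq_bigl => x.
by rewrite -{1}rr (root_connect (fconnect_sym inj)) fconnect_sym.
Qed.

Lemma card_by_orbits (T : finType) (f : T -> T) n : injective f ->
  (forall x, order f x = n) -> #|T| = #|[pred r | froot f r == r]| * n.
Proof.
move=> inj ord.
have -> : #|T| = \sum_(x : T) 1 by rewrite sum1_card.
rewrite (sum_by_orbits (fun _ => 1) inj) -sum_nat_const.
apply: eq_bigr => r _; rewrite -(ord r) /order -sum1_card.
by apply: eq_bigl.
Qed.

Lemma pair_in (a b : nat) : 0 < a -> a + b <= 3 ->
  (a, b) \in [:: (1, 0); (1, 1); (1, 2); (2, 0); (2, 1); (3, 0)]%N.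
Proof. by case: a => [|[|[|[|a]]]] //; case: b => [|[|[|b]]]. Qed.

Theorem lemma2p7 (D : finType) (alpha sigma : D -> D) (M : pred D) :
  is_comb_map alpha sigma ->
  map_connected alpha sigma ->
  genus0 alpha sigma ->
  trivalent sigma ->
  perfect_matching alpha sigma M ->
  complement_single_cycle alpha sigma M ->
  exists x : D,
    (mF alpha sigma M x, lF alpha sigma M x)
      \in [:: (1, 0); (1, 1); (1, 2); (2, 0); (2, 1); (3, 0)]%N.
Proof.
move=> [alphaK alpha_neq sigma_inj] _ Hg Htri [MA Mone] Hcyc.
set ph := phi alpha sigma.
have alpha_inj : injective alpha := can_inj alphaK.
have ph_inj : injective ph by move=> x y; rewrite /ph /phi => /sigma_inj /alpha_inj.
have s3 : forall x, sigma (sigma (sigma x)) = x.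
  by move=> x; have := iter_order sigma_inj x; rewrite Htri.
have sym_s := fconnect_sym sigma_inj.
have sym_p := fconnect_sym ph_inj.
have orb3 : forall x y, fconnect sigma x y ->
    [\/ y = x, y = sigma x | y = sigma (sigma x)].
  move=> x y xy; rewrite -(iter_findex xy); have := findex_max xy; rewrite Htri.
  by case: (findex sigma x y) => [|[|[|n]]] //= _; [constructor 1|constructor 2|constructor 3].
have uniqM : forall x y, fconnect sigma x y -> M x -> M y -> x = y.
  move=> x y xy Mx My.
  have : #|[pred z | fconnect sigma x z & M z]| <= 1 by rewrite Mone.
  move/card_le1_eqP => H; apply: H; by rewrite inE /= ?connect0 ?Mx ?xy ?My.
have exM : forall x, [\/ M x, M (sigma x) | M (sigma (sigma x))].
  move=> x; have : 0 < #|[pred z | fconnect sigma x z & M z]| by rewrite Mone.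
  case/card_gt0P => z; rewrite inE => /andP [xz Mz].
  by case: (orb3 _ _ xz) => E; rewrite E in Mz; [constructor 1|constructor 2|constructor 3].
have predp : forall y, ph (alpha (sigma (sigma y))) = y.
  by move=> y; rewrite /ph /phi alphaK s3.
have face_pred : forall r y, fconnect ph r y -> fconnect ph r (alpha (sigma (sigma y))).
  move=> r y ry; apply: connect_trans ry _.
  by have := fconnect1 ph (alpha (sigma (sigma y))); rewrite predp sym_p.
have bad_B : forall r y, (forall z, fconnect ph r z -> ~~ M z) ->
    fconnect ph r y -> M (sigma y).
  move=> r y Hr ry; case: (exM y) => // [My|Mssy].
    by move: (Hr _ ry); rewrite My.
  by move: (Hr _ (face_pred _ _ ry)); rewrite MA Mssy.
have clos : forall r, (forall z, fconnect ph r z -> ~~ M z) ->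
    forall y, exists2 s, fconnect ph r s & fconnect sigma s y.
  move=> r Hr y; case/connectP: (Hcyc r y) => p pth ->.
  have P0 : exists2 s, fconnect ph r s & fconnect sigma s r by exists r; apply: connect0.
  suff gen : forall u q,
      path [rel a b | (b == sigma a) || (~~ M a && (b == alpha a))] u q ->
      (exists2 s, fconnect ph r s & fconnect sigma s u) ->
      exists2 s, fconnect ph r s & fconnect sigma s (last u q).
    exact: gen _ _ pth P0.
  move=> u q; elim: q u => [|v q IH] u //= /andP [Ruv pth'] Pu.
  apply: IH pth' _.
  case/orP: Ruv => [/eqP-> | /andP [nMu /eqP->]].
    by case: Pu => s rs su; exists s => //; apply: connect_trans su (fconnect1 _ _).
  case: Pu => s rs su; have Bs := bad_B _ _ Hr rs.
  case: (orb3 _ _ su) => E; rewrite E {E} in nMu *.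
  - exists (ph s); first by apply: connect_trans rs (fconnect1 _ _).
    by rewrite sym_s; apply: fconnect1.
  - by rewrite Bs in nMu.
  - by exists (alpha (sigma (sigma s))); [apply: face_pred | apply: connect0].
have bad_uniq : forall r1 r2, froot ph r1 = r1 -> froot ph r2 = r2 ->
    (forall z, fconnect ph r1 z -> ~~ M z) ->
    (forall z, fconnect ph r2 z -> ~~ M z) -> r1 = r2.
  move=> r1 r2 e1 e2 H1 H2; case: (clos _ H1 r2) => s r1s sr2.
  have Bs := bad_B _ _ H1 r1s; have Br2 := bad_B _ _ H2 (connect0 _ r2).
  have : sigma s = sigma r2.
    apply: uniqM Bs Br2; apply: connect_trans (fconnect1 _ _).
    by apply: connect_trans sr2; rewrite sym_s; apply: fconnect1.
  move/sigma_inj => E; rewrite E in r1s.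
  by rewrite -e1 -e2; apply/(rootP sym_p).
pose m' r := #|[pred y | fconnect ph r y & M y]|.
pose l' r := #|[pred y | fconnect ph r y & M (sigma y)]|.
pose V := #|[pred r | froot sigma r == r]|.
pose E := #|[pred r | froot alpha r == r]|.
pose F := #|[pred r | froot ph r == r]|.
have HV : #|D| = V * 3 by apply: card_by_orbits.
have HE : #|D| = E * 2.
  apply: card_by_orbits => // x.
  have cyc : fcycle alpha [:: x; alpha x] by rewrite /= alphaK !eqxx.
  have U : uniq [:: x; alpha x] by rewrite /= inE eq_sym alpha_neq.
  by rewrite (order_cycle cyc U) // mem_head.
have HF : V + F = E + 2.
  move: Hg; rewrite /genus0 /n_comp_mem.
  suff eqc : forall f : D -> D, #|predI (froots f) (mem D)| = #|[pred r | froot f r == r]|.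
    by rewrite !eqc.
  by move=> f; apply: eq_card => x; rewrite !inE andbT.
have SM : \sum_(x : D) (M x : nat) = V.
  rewrite (sum_by_orbits _ sigma_inj) /V -sum1_card.
  by apply: eq_bigr => r _; rewrite sum_bool_card Mone.
have SMs : \sum_(x : D) (M (sigma x) : nat) = V.
  by rewrite -SM [RHS](reindex_inj sigma_inj).
have HS : \sum_(r | froot ph r == r) (m' r + l' r) = 2 * V.
  rewrite mul2n -addnn -{1}SM -SMs -big_split (sum_by_orbits _ ph_inj).
  by apply: eq_bigr => r _; rewrite big_split /= !sum_bool_card.
case: (pickP [pred r | (froot ph r == r) && (0 < m' r) && (m' r + l' r <= 3)])
    => [r /andP [/andP [_ m1] ml] | none].
  exists r.
  have mFle : mF alpha sigma M r <= m' r.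
    rewrite /mF /face_medges; apply: leq_trans (leq_imset_card _ _) _.
    by apply: subset_leq_card; apply/subsetP => y; rewrite !inE.
  have lFle : lF alpha sigma M r <= l' r.
    rewrite /lF; apply: leq_trans (leq_imset_card _ _) _.
    apply: subset_leq_card; apply/subsetP => y; rewrite !inE => /andP [ry /forallP cond].
    rewrite ry /=.
    case: (exM y) => // [My|Mssy].
      have := cond y; rewrite connect0 My /= => /negP; case.
      by apply: imset_f; rewrite inE.
    have := cond (sigma (sigma y)).
    rewrite Mssy andbT (fconnect_iter sigma 2 y) /= => /negP; case.
    have -> : edg alpha (sigma (sigma y)) = edg alpha (alpha (sigma (sigma y))).
      by rewrite /edg alphaK setUC.
    by apply: imset_f; rewrite inE; apply: face_pred.
  apply: pair_in; last by apply: leq_trans ml; apply: leq_add.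
  case/card_gt0P: m1 => y; rewrite inE => /andP [ry My].
  apply/card_gt0P; exists (edg alpha y); apply: imset_f; by rewrite !inE ry My.
have Hbad : forall r, m' r = 0 -> forall z, fconnect ph r z -> ~~ M z.
  move=> r m0 z rz; apply/negP => Mz.
  have : 0 < m' r by apply/card_gt0P; exists z; rewrite inE rz Mz.
  by rewrite m0.
have Z1 : \sum_(r | froot ph r == r) (m' r == 0 : nat) <= 1.
  rewrite sum_bool_card; apply/card_le1_eqP => r1 r2; rewrite !inE.
  move=> /andP [/eqP e1 /eqP z1] /andP [/eqP e2 /eqP z2].
  by apply: bad_uniq => //; apply: Hbad.
have Hge : \sum_(r | froot ph r == r) 4 <=
    \sum_(r | froot ph r == r) (m' r + l' r + 4 * (m' r == 0)).
  apply: leq_sum => r er; have := none r; rewrite /= er /=.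
  case: (posnP (m' r)) => [->|p] /=; first by rewrite add0n addnC leq_addr.
  by rewrite muln0 addn0 ltnNge => ->.
rewrite big_split /= HS -big_distrr /= sum_nat_const in Hge.
have eF : #|(fun i : D => froot ph i == i)| = F by apply: eq_card.
rewrite eF in Hge.
have H4 := leq_trans Hge (leq_add (leqnn (2 * V)) (leq_mul (leqnn 4) Z1)).
move: HV HE HF H4; clear; lia.
Qed.
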